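(* Let $\tau_k>0$ ($1\le k\le N$) be time steps, $t_n=\sum_{k=1}^n\tau_k$, $r_k=\tau_k/\tau_{k-1}$ for $2\le k\le N$, $r_1:=0$, with $0<r_k<1+\sqrt2$ for $2\le k\le N$. Define $b_0^{(1)}=1/\tau_1$, $b_1^{(1)}=0$ and for $n\ge2$ $b_0^{(n)}=\frac{1+2r_n}{\tau_n(1+r_n)}$, $b_1^{(n)}=-\frac{r_n^2}{\tau_n(1+r_n)}$. Let $\eta$ satisfy $\frac{r_k^2}{1+2r_k}\le\eta<1$ for all $2\le k\le N$, and define $d_0^{(n)}=b_0^{(n)}$, $d_j^{(n)}=\eta^{j-1}(b_0^{(n)}\eta+b_1^{(n)})$ for $1\le j\le n$. Let $\kappa>0$, $\lambda\in(0,1)$, and let $\{g^k\}_{k=1}^N$, $\{w^k\}_{k=0}^N$ be nonnegative sequences with $$\sum_{k=1}^n d_{n-k}^{(n)}(w^k-w^{k-1})\le\kappa\sum_{k=1}^n\lambda^{n-k}w^k+g^n\qquad\text{for }1\le n\le N.$$ If $b_0^{(n)}\ge2\kappa$ (for all $1\le n\le N$), then $$w^n\le2\exp\Big(\frac{2\kappa t_n}{1-\lambda}\Big)\Big(w^0+\sum_{j=1}^n\frac{g^j}{b_0^{(j)}}\Big)\qquad\text{for }1\le n\le N.$$ *)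

(* Defs.v *)
From mathcomp Require Import all_boot all_order all_algebra.
From mathcomp Require Import all_classical all_reals all_analysis.
Set Implicit Arguments. Unset Strict Implicit. Unset Printing Implicit Defensive.
Import Order.TTheory GRing.Theory Num.Theory.
Local Open Scope ring_scope.

Section Defs.
Context {R : realType}.

Definition tpt (tau : nat -> R) (n : nat) : R := \sum_(1 <= k < n.+1) tau k.

Definition tstep_ratio (tau : nat -> R) (k : nat) : R :=
  if (k <= 1)%N then 0 else tau k / tau k.-1.

Definition b0 (tau : nat -> R) (n : nat) : R :=
  if (n <= 1)%N then 1 / tau 1
  else (1 + 2 * tstep_ratio tau n) / (tau n * (1 + tstep_ratio tau n)).

Definition b1 (tau : nat -> R) (n : nat) : R :=
  if (n <= 1)%N then 0
  else - (tstep_ratio tau n ^+ 2) / (tau n * (1 + tstep_ratio tau n)).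

Definition dk (eta : R) (tau : nat -> R) (n j : nat) : R :=
  if j == 0%N then b0 tau n
  else eta ^+ j.-1 * (b0 tau n * eta + b1 tau n).
End Defs.

(* Main.v *)
Require Import Defs.
From mathcomp Require Import all_boot all_order all_algebra.
From mathcomp Require Import all_classical all_reals all_analysis.
From mathcomp Require Import ring lra.
Import Order.TTheory GRing.Theory Num.Theory.
Local Open Scope ring_scope.

Section H.
Variable R : realType.
Local Set Implicit Arguments.

Definition Sm (eta : R) (w : nat -> R) m :=
  \sum_(1 <= k < m.+1) eta ^+ (m - k) * (w k - w k.-1).

Lemma Sm0 eta w : Sm eta w 0 = 0.
Proof. by rewrite /Sm big_geq. Qed.

Lemma SmS eta w m : Sm eta w m.+1 = (w m.+1 - w m) + eta * Sm eta w m.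
Proof.
rewrite /Sm big_nat_recr //= subnn expr0 mul1r addrC; congr (_ + _).
rewrite big_distrr; apply: eq_big_nat => k /andP[_ hk].
by rewrite subSn // exprS -mulrA.
Qed.

Lemma Sm_lb eta w M : 0 <= eta <= 1 -> forall m,
  (forall k, (k <= m)%N -> w k <= M) -> w m - M <= Sm eta w m.
Proof.
move=> /andP[e0 e1]; elim=> [|m IH] H.
  by rewrite Sm0; have := H 0%N (leqnn 0); lra.
rewrite SmS.
have h1 := IH (fun k hk => H k (leqW hk)).
have h2 : w m <= M := H m (leqnSn m).
have h3 : eta * (w m - M) <= eta * Sm eta w m by apply: ler_wpM2l.
have h4 : (1 - eta) * (w m - M) <= 0.
  by apply: mulr_ge0_le0; lra.
nra.
Qed.

Definition Pm (lam : R) (w : nat -> R) m :=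
  \sum_(1 <= k < m.+1) lam ^+ (m - k) * w k.

Lemma Pm0 lam w : Pm lam w 0 = 0.
Proof. by rewrite /Pm big_geq. Qed.

Lemma PmS lam w m : Pm lam w m.+1 = w m.+1 + lam * Pm lam w m.
Proof.
rewrite /Pm big_nat_recr //= subnn expr0 mul1r addrC; congr (_ + _).
rewrite big_distrr; apply: eq_big_nat => k /andP[_ hk].
by rewrite subSn // exprS -mulrA.
Qed.

Lemma Pm_ub lam w M : 0 <= lam < 1 -> 0 <= M -> forall m,
  (forall k, (1 <= k <= m)%N -> w k <= M) -> Pm lam w m <= M / (1 - lam).
Proof.
move=> /andP[l0 l1] M0; elim=> [|m IH] H.
  by rewrite Pm0; apply: divr_ge0; lra.
rewrite PmS.
have h1 : Pm lam w m <= M / (1 - lam).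
  apply: IH => k /andP[k1 km]; apply: H; rewrite k1 /=; exact: leqW.
have h2 : w m.+1 <= M by apply: H; rewrite leqnn.
have h3 : lam * Pm lam w m <= lam * (M / (1 - lam)) by apply: ler_wpM2l.
have -> : M / (1 - lam) = M + lam * (M / (1 - lam)) by field; lra.
lra.
Qed.

Lemma lhs_eq eta tau w m :
  \sum_(1 <= k < m.+2) dk eta tau m.+1 (m.+1 - k) * (w k - w k.-1)
  = b0 tau m.+1 * (w m.+1 - w m) + (b0 tau m.+1 * eta + b1 tau m.+1) * Sm eta w m.
Proof.
rewrite big_nat_recr //= subnn /dk eqxx addrC; congr (_ + _).
rewrite /Sm big_distrr; apply: eq_big_nat => k /andP[_ hk].
rewrite subSn //=; ring.
Qed.

Lemma step_real (b k l M wn gn z : R) :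
  0 < k -> 2 * k <= b -> 0 <= l < 1 -> 0 <= M -> 0 <= gn -> 1 <= b * z ->
  b * (wn - M) <= k * (wn + l * (M / (1 - l))) + gn ->
  wn <= expR (2 * k * z / (1 - l)) * M + 2 * (gn / b).
Proof.
move=> k0 kb /andP[l0 l1] M0 g0 bz H.
have b0 : 0 < b by lra.
have l1' : 0 < 1 - l by lra.
set L := l / (1 - l).
have L0 : 0 <= L by apply: divr_ge0; lra.
have HL : l * (M / (1 - l)) = L * M by rewrite /L mulrA mulrAC.
rewrite HL in H.
set x := k / b.
have kx : k = x * b by rewrite /x divfK //; lra.
have x0 : 0 < x by apply: divr_gt0.
have xh : x <= 1/2.
  rewrite /x ler_pdivrMr //; lra.
have xz : x <= k * z.
  have : k * 1 <= k * (b * z) by rewrite ler_pM2l.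
  rewrite mulr1 => h. rewrite /x ler_pdivrMr //. lra.
have L2 : 2 + L <= 2 / (1 - l).
  have -> : 2 / (1 - l) = 2 + L + L by rewrite /L; field; lra.
  lra.
set e := expR _.
have he : (1 + 2 * x) * (1 + x * L) <= e.
  apply: (@le_trans _ _ (expR (2 * x) * expR (x * L))).
    have xL0 : 0 <= x * L by apply: mulr_ge0; lra.
    apply: ler_pM; try lra; exact: expR_ge1Dx.
  rewrite -expRD ler_expR.
  have h1 : x * (2 + L) <= (k * z) * (2 + L) by apply: ler_wpM2r; lra.
  have h2 : (k * z) * (2 + L) <= (k * z) * (2 / (1 - l)).
    apply: ler_wpM2l => //; apply: mulr_ge0; try lra.
    have : 0 < b * z by lra.
    by rewrite pmulr_rgt0 // => /ltW.
  have -> : 2 * k * z / (1 - l) = (k * z) * (2 / (1 - l)) by ring.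
  lra.
have H2 : (1 - x) * wn <= (1 + x * L) * M + gn / b.
  rewrite kx in H.
  have : b * ((1 - x) * wn) <= b * ((1 + x * L) * M + gn / b).
    rewrite mulrDr (mulrC b (gn / b)) divfK; last by lra.
    lra.
  by rewrite ler_pM2l.
have hx1 : 0 < 1 - x by lra.
rewrite -(ler_pM2l hx1).
apply: (le_trans H2).
have hq : 1 + x * L <= (1 - x) * e.
  apply: (@le_trans _ _ ((1 - x) * ((1 + 2 * x) * (1 + x * L)))); last first.
    by apply: ler_wpM2l; lra.
  have : 0 <= x * (1 - 2 * x) * (1 + x * L).
    apply: mulr_ge0; last by (have : 0 <= x * L by apply: mulr_ge0; lra); lra.
    apply: mulr_ge0; lra.
  move=> h. nra.
have hg : 0 <= gn / b by apply: divr_ge0; lra.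
have h3 : (1 + x * L) * M <= (1 - x) * e * M by apply: ler_wpM2r.
have h4 : gn / b <= (1 - x) * (2 * (gn / b)) by nra.
rewrite mulrDr mulrA. lra.
Qed.

End H.
Arguments Sm {R}. Arguments Pm {R}. Arguments step_real {R}.

Theorem lemma5p1 (R : realType) (N : nat) (tau : nat -> R) (eta kappa lambda : R)
  (g w : nat -> R)
  (Htau : forall k, (1 <= k <= N)%N -> 0 < tau k)
  (Hr : forall k, (2 <= k <= N)%N -> 0 < tstep_ratio tau k /\ tstep_ratio tau k < 1 + Num.sqrt 2)
  (Heta_lb : forall k, (2 <= k <= N)%N ->
     tstep_ratio tau k ^+ 2 / (1 + 2 * tstep_ratio tau k) <= eta)
  (Heta_ub : eta < 1)
  (Hkappa : 0 < kappa) (Hlambda : 0 < lambda < 1)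
  (Hg : forall k, (1 <= k <= N)%N -> 0 <= g k)
  (Hw : forall k, (k <= N)%N -> 0 <= w k)
  (Hineq : forall n, (1 <= n <= N)%N ->
     \sum_(1 <= k < n.+1) dk eta tau n (n - k) * (w k - w k.-1)
       <= kappa * \sum_(1 <= k < n.+1) lambda ^+ (n - k) * w k + g n)
  (Hb0 : forall n, (1 <= n <= N)%N -> 2 * kappa <= b0 tau n) :
  forall n, (1 <= n <= N)%N ->
    w n <= 2 * expR (2 * kappa * tpt tau n / (1 - lambda))
             * (w 0%N + \sum_(1 <= j < n.+1) g j / b0 tau j).
Proof.
have /andP[l0 l1] := Hlambda.
have l1' : 0 < 1 - lambda by lra.
have b0pos : forall n, (1 <= n <= N)%N -> 0 < b0 tau n.
  by move=> n hn; have := Hb0 n hn; lra.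
have ratio : forall n, (2 <= n <= N)%N ->
   [/\ 1 <= b0 tau n * tau n, 0 <= b0 tau n * eta + b1 tau n,
       b0 tau n * eta + b1 tau n <= b0 tau n & 0 <= eta].
  move=> n /andP[n2 nN].
  have t0 : 0 < tau n by apply: Htau; rewrite nN andbT; exact: ltnW.
  have [r0 _] := Hr n (introT andP (conj n2 nN)).
  have he := Heta_lb n (introT andP (conj n2 nN)).
  have hb0 := b0pos n (introT andP (conj (ltnW n2) nN)).
  move: hb0; rewrite /b0 /b1; have -> : (n <= 1)%N = false by case: n n2 {t0 r0 he nN} => [|[]].
  move: he r0; set r := tstep_ratio tau n => he r0 hb0.
  have r1 : 0 < 1 + r by lra.
  have r2 : 0 < 1 + 2 * r by lra.
  have e0 : 0 <= eta.
    apply: le_trans he; apply: divr_ge0; [exact: sqr_ge0 | lra].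
  have he' : r ^+ 2 <= eta * (1 + 2 * r) by rewrite -ler_pdivrMr.
  have d0 : 0 < tau n * (1 + r) by apply: mulr_gt0.
  split => //.
  - have -> : (1 + 2 * r) / (tau n * (1 + r)) * tau n = (1 + 2 * r) / (1 + r).
      by field; rewrite ?gt_eqF.
    rewrite ler_pdivlMr //; lra.
  - have -> : (1 + 2 * r) / (tau n * (1 + r)) * eta + - r ^+ 2 / (tau n * (1 + r))
       = (eta * (1 + 2 * r) - r ^+ 2) / (tau n * (1 + r)) by ring.
    apply: divr_ge0; lra.
  - have : 0 <= r ^+ 2 / (tau n * (1 + r)) by apply: divr_ge0; [exact: sqr_ge0 | lra].
    have : (1 + 2 * r) / (tau n * (1 + r)) * eta <= (1 + 2 * r) / (tau n * (1 + r)) * 1.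
      by apply: ler_wpM2l; lra.
    rewrite mulr1 mulNr; lra.
have bz : forall n, (1 <= n <= N)%N -> 1 <= b0 tau n * tau n.
  move=> n /andP[n1 nN]; case: (ltnP 1 n) => hn.
    by have [] := ratio n (introT andP (conj hn nN)).
  have e1 : n = 1%N by apply/eqP; rewrite eqn_leq hn n1.
  subst n; have t0 : 0 < tau 1%N by apply: Htau.
  by rewrite /b0 /= mul1r mulVf // gt_eqF.
set E := fun n => expR (2 * kappa * tpt tau n / (1 - lambda)).
set A := fun n => w 0%N + 2 * \sum_(1 <= j < n.+1) g j / b0 tau j.
have tptS : forall m, tpt tau m.+1 = tpt tau m + tau m.+1.
  by move=> m; rewrite /tpt big_nat_recr.
have ES : forall m, E m.+1 = E m * expR (2 * kappa * tau m.+1 / (1 - lambda)).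
  by move=> m; rewrite /E -expRD tptS; congr expR; ring.
have AS : forall m, A m.+1 = A m + 2 * (g m.+1 / b0 tau m.+1).
  by move=> m; rewrite /A big_nat_recr //= mulrDr addrA.
have tpt0 : forall m, (m <= N)%N -> 0 <= tpt tau m.
  move=> m mN; rewrite /tpt big_nat_cond; apply: sumr_ge0 => i /andP[/andP[i1 i2] _].
  by apply/ltW/Htau; rewrite i1 /=; apply: leq_trans mN.
have E1 : forall m, (m <= N)%N -> 1 <= E m.
  move=> m mN; apply: le_trans (expR_ge1Dx _) ; rewrite lerDl.
  apply: divr_ge0; last lra; apply: mulr_ge0; [lra | exact: tpt0].
have A0 : forall m, (m <= N)%N -> 0 <= A m.
  move=> m mN; rewrite /A; apply: addr_ge0; first exact: Hw.
  apply: mulr_ge0 => //; rewrite big_nat_cond; apply: sumr_ge0 => i /andP[/andP[i1 i2] _].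
  have iN : (1 <= i <= N)%N by rewrite i1 /=; apply: leq_trans mN.
  by apply: divr_ge0; [exact: Hg | exact/ltW/b0pos].
have claim : forall n, (n <= N)%N -> forall k, (k <= n)%N -> w k <= E n * A n.
  elim=> [|m IH] mN k hk.
    have -> : k = 0%N by apply/eqP; rewrite -leqn0.
    by rewrite /E /A /tpt !big_geq // !mulr0 mul0r expR0 mul1r addr0.
  have mN' : (m <= N)%N by apply: ltnW.
  have IH' := IH mN'.
  set M := E m * A m.
  have M0 : 0 <= M by apply: mulr_ge0; [apply: le_trans (E1 m mN') | exact: A0].
  have m1N : (1 <= m.+1 <= N)%N by rewrite mN.
  have ge1 : 1 <= expR (2 * kappa * tau m.+1 / (1 - lambda)).
    apply: le_trans (expR_ge1Dx _) ; rewrite lerDl.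
    apply: divr_ge0; last lra; apply: mulr_ge0; [lra | exact/ltW/Htau].
  have gb0 : 0 <= g m.+1 / b0 tau m.+1 by apply: divr_ge0; [exact: Hg | exact/ltW/b0pos].
  have EmS : E m <= E m.+1.
    rewrite ES; rewrite -{1}(mulr1 (E m)); apply: ler_wpM2l => //.
    by apply: le_trans (E1 m mN').
  have AmS : A m <= A m.+1 by rewrite AS lerDl; lra.
  have MS : M <= E m.+1 * A m.+1.
    by apply: ler_pM => //; [apply: le_trans (E1 m mN') | exact: A0].
  case: (ltnP k m.+1) => hk'.
    by apply: le_trans MS; apply: IH'.
  have -> : k = m.+1 by apply/eqP; rewrite eqn_leq hk hk'.
  have key : w m.+1 <= expR (2 * kappa * tau m.+1 / (1 - lambda)) * M + 2 * (g m.+1 / b0 tau m.+1).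
    apply: (@step_real R _ _ _ _ _ _ _ Hkappa (Hb0 _ m1N) (introT andP (conj (ltW l0) l1)) M0 (Hg _ m1N) (bz _ m1N)).
    have H := Hineq _ m1N.
    rewrite lhs_eq in H.
    change (\sum_(1 <= k < m.+2) lambda ^+ (m.+1 - k) * w k) with (Pm lambda w m.+1) in H.
    rewrite PmS in H.
    have hP : Pm lambda w m <= M / (1 - lambda).
      apply: Pm_ub => //; [lra | move=> j /andP[_ jm]; exact: IH'].
    have hR : kappa * (w m.+1 + lambda * Pm lambda w m) <= kappa * (w m.+1 + lambda * (M / (1 - lambda))).
      by apply: ler_wpM2l; [lra | rewrite lerD2l; apply: ler_wpM2l; lra].
    have wmM : w m <= M := IH' m (leqnn m).
    have hb := b0pos _ m1N.
    suff hL : b0 tau m.+1 * (w m.+1 - M) <= b0 tau m.+1 * (w m.+1 - w m) +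
        (b0 tau m.+1 * eta + b1 tau m.+1) * Sm eta w m by lra.
    case: (posnP m) => hm.
      subst m; rewrite Sm0 mulr0 addr0; apply: ler_wpM2l; lra.
    have m2 : (1 < m.+1 <= N)%N by rewrite ltnS hm mN.
    have [_ c0 cb e0] := ratio _ m2.
    have hS := @Sm_lb R eta w M (introT andP (conj e0 (ltW Heta_ub))) m IH'.
    have h1 : (b0 tau m.+1 * eta + b1 tau m.+1) * (w m - M) <=
              (b0 tau m.+1 * eta + b1 tau m.+1) * Sm eta w m by apply: ler_wpM2l.
    have h2 : (b0 tau m.+1 - (b0 tau m.+1 * eta + b1 tau m.+1)) * w m <=
              (b0 tau m.+1 - (b0 tau m.+1 * eta + b1 tau m.+1)) * M by apply: ler_wpM2l; lra.
    nra.
  apply: (le_trans key).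
  have -> : E m.+1 * A m.+1 = expR (2 * kappa * tau m.+1 / (1 - lambda)) * M
      + E m.+1 * (2 * (g m.+1 / b0 tau m.+1)) by rewrite AS ES /M; ring.
  rewrite lerD2l -{1}(mul1r (2 * _)); apply: ler_wpM2r; [lra | exact: E1].
move=> n /andP[n1 nN].
have h := claim n nN n (leqnn n).
have En := E1 n nN.
have hs : 0 <= w 0%N by apply: Hw.
have hE : 0 <= E n * w 0%N by apply: mulr_ge0; lra.
apply: (le_trans h); rewrite /A /E /=.
set S := \sum_(_ <= _ < _) _.
set e := expR _.
have -> : e * (w 0%N + 2 * S) = 2 * e * (w 0%N + S) - e * w 0%N by ring.
rewrite /E /= -/e in hE; lra.
Qed.
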